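(* Let $q$ be a prime power and let $\mathcal C$ be an optimal $(5,3)_q$ subspace code, i.e. a set of subspaces of $V={\rm GF}(q)^5$ with minimum subspace distance $3$ and of maximum possible size among such sets. If $\mathcal C$ contains a point of ${\rm PG}(4,q)$ (a $1$-dimensional subspace of $V$), then $\mathcal C$ contains at most $q^3$ planes (3-dimensional subspaces of $V$). Dually, if $\mathcal C$ contains a solid (a $4$-dimensional subspace of $V$), then $\mathcal C$ contains at most $q^3$ lines ($2$-dimensional subspaces of $V$).
   Context: The subspace distance between subspaces $U,U'$ of $V$ is $d_s(U,U')=\dim(U+U')-\dim(U\cap U')$. The minimum subspace distance of a set $\mathcal C$ of subspaces is $\min\{d_s(U,U') : U,U'\in\mathcal C, U\ne U'\}$. Points, lines, planes and solids of ${\rm PG}(4,q)$ are the subspaces of $V$ of (vector) dimension $1,2,3,4$ respectively. *)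

(* Defs.v *)
From HB Require Import structures.
From mathcomp Require Import all_boot all_order all_algebra all_field.
From mathcomp Require Import finmap.
Set Implicit Arguments.
Unset Strict Implicit.
Unset Printing Implicit Defensive.
Import GRing.Theory.
Local Open Scope fset_scope.

Definition subspace_dist (F : fieldType) (n : nat) (U W : {vspace 'rV[F]_n}) : nat :=
  (\dim (U + W) - \dim (U :&: W))%N.

Definition min_dist_ge (F : fieldType) (n d : nat) (C : {fset {vspace 'rV[F]_n}}) : Prop :=
  forall U W, U \in C -> W \in C -> U != W -> (d <= subspace_dist U W)%N.

Definition optimal_code (F : fieldType) (n d : nat) (C : {fset {vspace 'rV[F]_n}}) : Prop :=
  min_dist_ge d C /\
  forall D : {fset {vspace 'rV[F]_n}}, min_dist_ge d D -> (#|` D| <= #|` C|)%N.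

Definition members_of_dim (F : fieldType) (n k : nat) (C : {fset {vspace 'rV[F]_n}}) :
  {fset {vspace 'rV[F]_n}} := [fset U in C | \dim U == k].

(* Main.v *)
Require Import Defs.
From HB Require Import structures.
From mathcomp Require Import all_boot all_order all_algebra all_field.
From mathcomp Require Import finmap zify.

Module Aux.
Local Set Implicit Arguments.
Local Unset Strict Implicit.
Import GRing.Theory.
Local Open Scope ring_scope.

Section Ann.
Variable F : finFieldType.
Local Notation V := 'rV[F]_5.

Lemma dimf5 : \dim {:V} = 5%N.
Proof. by rewrite dimvf dim_matrix. Qed.

Lemma dim_le5 (U : {vspace V}) : (\dim U <= 5)%N.
Proof. by have := dimvS (subvf U); rewrite dimf5. Qed.

Definition annM (U : {vspace V}) : 'M[F]_(\dim U, 5) := \matrix_(i < \dim U) (vbasis U)`_i.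

Definition ann (U : {vspace V}) : {vspace V} :=
  lker (linfun (@mulmxr _ 1 5 (\dim U) (annM U)^T)).

Lemma memv_annP (U : {vspace V}) (f : V) :
  reflect (forall u, u \in U -> u *m f^T = 0) (f \in ann U).
Proof.
rewrite memv_ker lfunE /=.
have E : (f *m (annM U)^T == 0) = [forall i : 'I_(\dim U), (vbasis U)`_i *m f^T == 0].
  apply/eqP/forallP => [H i | H].
    have := congr1 (fun A => row i (A^T)) H.
    by rewrite trmx_mul trmxK row_mul /annM rowK trmx0 row0 => ->.
  apply: trmx_inj; rewrite trmx_mul trmxK trmx0; apply/row_matrixP => i.
  by rewrite row_mul /annM rowK row0; apply/eqP.
rewrite E; apply: (iffP forallP) => [H u /coord_vbasis -> | H i].
  rewrite mulmx_suml; apply: big1 => i _.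
  by rewrite -scalemxAl (eqP (H i)) scaler0.
by apply/eqP/H; rewrite vbasis_mem // memt_nth.
Qed.

Lemma ann_cap (U W : {vspace V}) : (ann U :&: ann W <= ann (U + W))%VS.
Proof.
apply/subvP => f /memv_capP [/memv_annP HU /memv_annP HW].
apply/memv_annP => x /memv_addP [u Hu [w Hw ->]].
by rewrite mulmxDl HU // HW // addr0.
Qed.

Lemma ann_full : ann fullv = 0%VS.
Proof.
apply/eqP; rewrite -subv0; apply/subvP => f /memv_annP H.
rewrite memv0; apply/eqP/rowP => j.
have := congr1 (fun A : 'M_1 => A 0 0) (H (delta_mx 0 j) (memvf _)).
by rewrite -rowE !mxE.
Qed.

Lemma dim_ann_ge (U : {vspace V}) : (5 <= \dim (ann U) + \dim U)%N.
Proof.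
have H := limg_ker_dim (linfun (@mulmxr _ 1 5 (\dim U) (annM U)^T)) fullv.
rewrite capfv dimf5 -/(ann U) in H.
have H2 : (\dim (limg (linfun (@mulmxr _ 1 5 (\dim U) (annM U)^T))) <= \dim U)%N.
  have := dimvS (subvf (limg (linfun (@mulmxr _ 1 5 (\dim U) (annM U)^T)))).
  by rewrite dimvf dim_matrix; lia.
move: H H2; rewrite /ann; set a := \dim _; set b := \dim _; set c := \dim _. lia.
Qed.

Lemma dim_ann_le (U : {vspace V}) : (\dim (ann U) + \dim U <= 5)%N.
Proof.
have H1 := dim_ann_ge (U^C)%VS.
rewrite dimv_compl dimf5 in H1.
have H2 := dimv_sum_cap (ann U) (ann (U^C)%VS).
have H3 : \dim (ann U :&: ann U^C) = 0%N.
  apply/eqP; rewrite dimv_eq0 -subv0.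
  by have := ann_cap U (U^C)%VS; rewrite addv_complf ann_full.
have H4 := dim_le5 (ann U + ann U^C)%VS.
have H5 := dim_le5 U.
lia.
Qed.
End Ann.

Section Count.
Variable F : finFieldType.
Local Notation V := 'rV[F]_5.

Definition outS (S L : {vspace V}) : {set V} := [set v | (v \in L) && (v \notin S)].

Lemma card_outS (S L : {vspace V}) :
  (#|F| ^ \dim L <= #|outS S L| + #|F| ^ \dim (L :&: S))%N.
Proof.
rewrite -!card_vspace -[X in (X <= _)%N]cardsE -[#|(L :&: S)%VS|]cardsE.
apply: leq_trans (leq_card_setU _ _); apply: subset_leq_card.
apply/subsetP => v; rewrite !inE memv_cap => ->; by case: (v \in S).
Qed.

Lemma mem_bigcup_seq (S : {vspace V}) (s : seq {vspace V}) v :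
  v \in \bigcup_(L <- s) outS S L -> exists2 L, L \in s & v \in outS S L.
Proof.
elim: s => [|a s IH]; first by rewrite big_nil inE.
rewrite big_cons inE => /orP [H | /IH [L HL Hv]].
  by exists a => //; exact: mem_head.
by exists L; rewrite // inE HL orbT.
Qed.

Lemma card_union (S : {vspace V}) (s : seq {vspace V}) :
  uniq s ->
  (forall L L', L \in s -> L' \in s -> L != L' -> (L :&: L')%VS = 0%VS) ->
  #|\bigcup_(L <- s) outS S L| = (\sum_(L <- s) #|outS S L|)%N.
Proof.
elim: s => [|a s IH] /=; first by rewrite !big_nil cards0.
move=> /andP [anot us] H.
rewrite !big_cons -IH //; last first.
  by move=> L L' HL HL'; apply: H; rewrite inE ?HL ?HL' orbT.
rewrite cardsU.
suff -> : outS S a :&: \bigcup_(L <- s) outS S L = set0 by rewrite cards0 subn0.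
apply/setP => v; rewrite !inE; apply/negP => /andP [/andP [va vS]].
move/mem_bigcup_seq => [L HL]; rewrite inE => /andP [vL _].
have aL : a != L by apply: contraNneq anot => ->.
have HaL : L \in a :: s by rewrite inE HL orbT.
have := H a L (mem_head _ _) HaL aL.
move=> HI; have : v \in (a :&: L)%VS by rewrite memv_cap va vL.
rewrite HI memv0 => /eqP v0.
by move: vS; rewrite v0 mem0v.
Qed.

Lemma arith n u x qs q : (n * (q ^ 2 - q) <= u)%N -> (u <= x)%N ->
  (qs + x = q ^ 5)%N -> (q ^ 4 <= qs)%N -> (1 < q)%N -> (n <= q ^ 3)%N.
Proof.
move=> H1 H2 H3 H4 H5.
have E1 : (q ^ 5 = q ^ 3 * (q * q))%N by rewrite !expnS expn0 !muln1 !mulnA.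
have E2 : (q ^ 4 = q ^ 3 * q)%N by rewrite !expnS expn0 !muln1 !mulnA.
have Hp : (0 < q * q - q)%N by nia.
have E3 : (q ^ 2 = q * q)%N by rewrite !expnS expn0 !muln1.
rewrite E3 in H1.
have : (n * (q * q - q) <= q ^ 3 * (q * q - q))%N.
  move: H1 H2 H3 H4; rewrite E1 E2; move: (q ^ 3)%N => c; nia.
by rewrite leq_pmul2r.
Qed.

Lemma count_lines (S : {vspace V}) (Ls : seq {vspace V}) :
  uniq Ls -> (4 <= \dim S)%N ->
  (forall L, L \in Ls -> (2 <= \dim L)%N /\ (\dim (L :&: S) <= 1)%N) ->
  (forall L L', L \in Ls -> L' \in Ls -> L != L' -> (L :&: L')%VS = 0%VS) ->
  (size Ls <= #|F| ^ 3)%N.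
Proof.
move=> uL dS HL HLL.
have q2 : (1 < #|F|)%N by apply: finNzRing_gt1.
have Hsum : ((size Ls) * (#|F| ^ 2 - #|F|) <= \sum_(L <- Ls) #|outS S L|)%N.
  rewrite -sum1_size big_distrl /= big_seq_cond [X in (_ <= X)%N]big_seq_cond.
  apply: leq_sum => L /andP [HLs _]; rewrite mul1n.
  have [d2 d1] := HL L HLs.
  have := card_outS S L.
  have : (#|F| ^ 2 <= #|F| ^ \dim L)%N by rewrite leq_pexp2l // ltnW.
  have : (#|F| ^ \dim (L :&: S) <= #|F| ^ 1)%N by rewrite leq_pexp2l // ltnW.
  rewrite expn1; move: (#|F| ^ \dim (L :&: S))%N (#|F| ^ \dim L)%N (#|F| ^ 2)%N #|outS S L| => a b c d.
move: #|F| => e.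
lia.
rewrite -card_union // in Hsum.
have Hsub : (#|\bigcup_(L <- Ls) outS S L| <= #|~: [set v in S]|)%N.
  apply: subset_leq_card; apply/subsetP => v /mem_bigcup_seq [L _].
  by rewrite !inE => /andP [_ ->].
have HC := cardsC [set v in S].
rewrite cardsE card_vspace card_mx mul1n in HC.
have HS : (#|F| ^ 4 <= #|F| ^ \dim S)%N by rewrite leq_pexp2l // ltnW.
move: Hsum Hsub HC HS q2; move: (#|F| ^ \dim S)%N => qs.
move: (#|\bigcup_(L <- Ls) outS S L|) #|~: [set v in S]| => u x.
move: (size Ls) #|F| => n q.
exact: arith.
Qed.
End Count.

End Aux.
Import Aux.
Import GRing.Theory.
Local Open Scope fset_scope.

Lemma dist_info (F : finFieldType) (C : {fset {vspace 'rV[F]_5}}) U W :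
  min_dist_ge 3 C -> U \in C -> W \in C -> U != W ->
  [/\ (3 <= \dim (U + W) - \dim (U :&: W))%N,
      (\dim (U + W) + \dim (U :&: W) = \dim U + \dim W)%N &
      (\dim (U + W) <= 5)%N].
Proof.
move=> H HU HW nUW; split; [exact: H | exact: dimv_sum_cap | exact: dim_le5].
Qed.

Lemma memM (F : finFieldType) (C : {fset {vspace 'rV[F]_5}}) k U :
  U \in members_of_dim k C -> U \in C /\ \dim U = k.
Proof. by rewrite /members_of_dim !inE => /andP [-> /eqP]. Qed.

Theorem lemma1p1 (F : finFieldType) (C : {fset {vspace 'rV[F]_5}}) :
  optimal_code 3 C ->
  ((exists2 P, P \in C & \dim P = 1%N) ->
     (#|` members_of_dim 3 C| <= #|F| ^ 3)%N) /\
  ((exists2 S, S \in C & \dim S = 4%N) ->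
     (#|` members_of_dim 2 C| <= #|F| ^ 3)%N).
Proof.
move=> [Hd _]; split.
- case=> P PC dP.
  set M := members_of_dim 3 C.
  have Hfull : forall p p', p \in M -> p' \in M -> p != p' -> (p + p')%VS = fullv.
    move=> p p' /memM [pC dp] /memM [pC' dp'] npp.
    have [] := @dist_info _ _ _ _ Hd pC pC' npp; rewrite dp dp' => h1 h2 h3.
    apply/eqP; rewrite eqEdim subvf dimf5 /=; lia.
  have Hcap : forall p p', p \in M -> p' \in M -> p != p' -> (ann p :&: ann p')%VS = 0%VS.
    move=> p p' pM pM' npp; apply/eqP; rewrite -subv0.
    by have := ann_cap p p'; rewrite Hfull // ann_full.
  have Hinj : {in M &, injective (@ann F)}.
    move=> p p' pM pM' E; apply/eqP; apply/negP => /negP npp.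
    have := Hcap p p' pM pM' npp; rewrite -E capvv => /eqP.
    rewrite -dimv_eq0; have := dim_ann_ge p; have [_ ->] := @memM _ _ _ _ pM; lia.
  have -> : #|` M| = size (map (@ann F) (enum_fset M)) by rewrite size_map.
  apply: (@count_lines F (ann P)).
  + rewrite map_inj_in_uniq //; exact: fset_uniq.
  + by have := dim_ann_ge P; rewrite dP; lia.
  + move=> L /mapP [p pM ->]; have [pC dp] := @memM _ _ _ _ pM; split.
      by have := dim_ann_ge p; rewrite dp; lia.
    have npP : p != P by apply/eqP => E; move: dp; rewrite E dP.
    have [] := @dist_info _ _ _ _ Hd pC PC npP; rewrite dp dP => h1 h2 h3.
    have := dimvS (ann_cap p P); have := dim_ann_le (p + P)%VS; lia.
  + move=> L L' /mapP [p pM ->] /mapP [p' pM' ->] nL.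
    apply: Hcap => //; apply: contraNneq nL => ->; done.
- case=> S SC dS.
  have := @count_lines F S (enum_fset (members_of_dim 2 C)) (fset_uniq _).
  apply; first by rewrite dS.
  + move=> L /memM [LC dL]; split; first by rewrite dL.
    have nLS : L != S by apply/eqP => E; move: dL; rewrite E dS.
    have [] := @dist_info _ _ _ _ Hd LC SC nLS; rewrite dL dS; lia.
  + move=> L L' /memM [LC dL] /memM [LC' dL'] nLL.
    apply/eqP; rewrite -dimv_eq0.
    have [] := @dist_info _ _ _ _ Hd LC LC' nLL; rewrite dL dL'; lia.
Qed.
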